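(* Let $\lambda$ be a partition of $r$ and let $M$ be a $\mathbf{Z}S_r$-module that is free as a $\mathbf{Z}$-module. If $f:S^\lambda\to M$ is a non-zero homomorphism of $\mathbf{Z}S_r$-modules, then $f$ is injective.
   Context: $S^\lambda$ denotes the integral Specht module for $\mathbf{Z}S_r$ (the $\mathbf{Z}$-span of the $\lambda$-polytabloids in the Young permutation module $M^\lambda$). *)

(* Defs.v *)
From HB Require Import structures.
From mathcomp Require Import all_boot all_order all_algebra all_fingroup.
Set Implicit Arguments. Unset Strict Implicit. Unset Printing Implicit Defensive.
Import GRing.Theory.
Local Open Scope ring_scope.

Definition is_partition (lam : seq nat) (r : nat) : bool :=
  [&& sorted geq lam, all (fun x => 0 < x)%N lam & sumn lam == r].

(* Cells of the Young diagram of lam are numbered 0..r-1 in row-reading order;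
   row_of / col_of give the row / column of cell k. *)
Definition row_of (lam : seq nat) (k : nat) : nat :=
  count (fun i => sumn (take i.+1 lam) <= k)%N (iota 0 (size lam)).
Definition col_of (lam : seq nat) (k : nat) : nat :=
  (k - sumn (take (row_of lam k) lam))%N.

(* A lam-tableau is t : 'S_r, cell k carrying entry t k.  S_r acts on the right
   on tableaux by t.s = t * s (entry i replaced by s i; (t * s) k = s (t k)). *)

(* Row functions: entry i |-> row index (rows < size lam <= r). *)
Notation rowfun r := {ffun 'I_r -> 'I_r.+1}.

(* The tabloid {t}, encoded as the function sending each entry to its row. *)
Definition tabloid (lam : seq nat) (r : nat) (t : 'S_r) : rowfun r :=
  [ffun i => inord (row_of lam ((t^-1)%g i))].

(* The permutation module: formal Z-combinations of row functions (it contains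
   the Young permutation module M^lam as the span of the tabloids). *)
Notation Mperm r := {ffun rowfun r -> int}.

Definition delta (r : nat) (phi : rowfun r) : Mperm r :=
  [ffun psi => ((psi == phi) : nat)%:Z].

(* Right action of S_r on Mperm: (v.s)(psi) = v(psi.s^-1), so delta phi . s = delta (phi.s)
   where (phi.s)(i) = phi (s^-1 i). *)
Definition mperm_act (r : nat) (s : 'S_r) (v : Mperm r) : Mperm r :=
  [ffun psi : rowfun r => v [ffun i => psi (s i)]].

Definition colgroup (lam : seq nat) (r : nat) (t : 'S_r) : pred 'S_r :=
  fun p => [forall i, col_of lam ((t^-1)%g (p i)) == col_of lam ((t^-1)%g i)].

Definition polytabloid (lam : seq nat) (r : nat) (t : 'S_r) : Mperm r :=
  \sum_(p : 'S_r | colgroup lam t p) delta (tabloid lam (t * p)%g) *~ ((-1) ^+ odd_perm p).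

Definition specht (lam : seq nat) (r : nat) (v : Mperm r) : Prop :=
  exists c : {ffun 'S_r -> int}, v = \sum_(t : 'S_r) polytabloid lam t *~ c t.

Definition is_ZSr_action (r : nat) (M : zmodType) (act : 'S_r -> M -> M) : Prop :=
  [/\ forall g x y, act g (x + y) = act g x + act g y,
      forall x, act 1%g x = x &
      forall g h x, act (g * h)%g x = act h (act g x)].

Definition free_Zmodule (M : zmodType) : Prop :=
  exists (I : eqType) (b : I -> M),
    (forall (s : seq I) (c : I -> int), uniq s ->
        \sum_(i <- s) b i *~ c i = 0 -> forall i, i \in s -> c i = 0)
    /\ (forall m : M, exists (s : seq I) (c : I -> int), m = \sum_(i <- s) b i *~ c i).

(* Main.v *)
Require Import Defs.
From mathcomp Require Import all_boot all_order all_algebra all_fingroup zify.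
Import GRing.Theory.
Set Implicit Arguments. Unset Strict Implicit. Unset Printing Implicit Defensive.

Section Shape.
Variable lam : seq nat.
Definition pos i := sumn (take i lam).

Lemma pos_S i : pos i <= pos i.+1.
Proof.
rewrite /pos; case: (ltnP i (size lam)) => H.
  by rewrite (take_nth 0 H) sumn_rcons leq_addr.
by rewrite !take_oversize // (leq_trans H).
Qed.

Lemma pos_mono i j : i <= j -> pos i <= pos j.
Proof.
elim: j => [|j IH]; first by rewrite leqn0 => /eqP->.
rewrite leq_eqVlt => /orP[/eqP->//|H].
exact: leq_trans (IH H) (pos_S j).
Qed.

Lemma pos_le_sum i : pos i <= sumn lam.
Proof.
have -> : sumn lam = pos (i + size lam) by rewrite /pos take_oversize // leq_addl.
by apply: pos_mono; rewrite leq_addr.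
Qed.

Lemma count_down (P : pred nat) n : (forall i j, i <= j -> P j -> P i) ->
  forall i, i < n -> P i = (i < count P (iota 0 n)).
Proof.
move=> Pd; elim: n => [//|n IH] i.
rewrite -[n.+1]addn1 iotaD count_cat /= addn0 add0n.
have cn : count P (iota 0 n) <= n by rewrite -{2}(size_iota 0 n) count_size.
case Pn: (P n).
  have Hall : count P (iota 0 n) = n.
    have : all P (iota 0 n).
      apply/allP => j.
      rewrite mem_iota add0n /= => jn; apply: (Pd j n) => //; exact: ltnW.
    by rewrite all_count size_iota => /eqP.
  rewrite Hall addn1 ltnS => iln; rewrite iln; exact: (Pd i n).

rewrite addn1 ltnS /= addn0 leq_eqVlt => /orP[/eqP->|iln].
  by rewrite ltnNge cn.
exact: IH.
Qed.

Let Pk k := fun i => pos i.+1 <= k.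
Lemma Pk_down k i j : i <= j -> Pk k j -> Pk k i.
Proof. by move=> ij H; apply: leq_trans H; apply: pos_mono. Qed.

Lemma row_ofE k : row_of lam k = count (Pk k) (iota 0 (size lam)).
Proof. by []. Qed.

Lemma row_size k : row_of lam k <= size lam.
Proof. by rewrite row_ofE -{2}(size_iota 0 (size lam)) count_size. Qed.

Lemma row_lb k : pos (row_of lam k) <= k.
Proof.
have := row_size k; case E: (row_of lam k) => [|m] ms.
  by rewrite /pos take0.
have := @count_down (Pk k) (size lam) (@Pk_down k) m ms.
by rewrite -row_ofE E ltnSn.
Qed.

Lemma row_ub k : k < sumn lam -> k < pos (row_of lam k).+1.
Proof.
move=> ks; have := row_size k; rewrite leq_eqVlt => /orP[/eqP E|ms].
  by rewrite E /pos take_oversize.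
have := @count_down (Pk k) (size lam) (@Pk_down k) _ ms.
by rewrite -row_ofE ltnn /Pk => /negbT; rewrite -ltnNge.
Qed.

Lemma row_uniq k i : pos i <= k < pos i.+1 -> row_of lam k = i.
Proof.
move=> /andP[ik ki].
have ks : k < sumn lam by apply: leq_trans ki (pos_le_sum _).
case: (ltngtP (row_of lam k) i) => // H.
  have := row_ub ks => H2.
  have := leq_trans (pos_mono H) ik.
  by rewrite leqNgt H2.
have isz : i < size lam by apply: leq_trans H (row_size k).
have := @count_down (Pk k) (size lam) (@Pk_down k) _ isz.
by rewrite -row_ofE H /Pk leqNgt ki.
Qed.

Lemma cell_inj k k' : row_of lam k = row_of lam k' -> col_of lam k = col_of lam k' -> k = k'.
Proof.
rewrite /col_of => E; rewrite E => C.
have h1 := row_lb k; have h2 := row_lb k'; rewrite E in h1.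
have := congr1 (addn^~ (pos (row_of lam k'))) C; rewrite /= !subnK //.
Qed.

Lemma cell_down k j : k < sumn lam -> j < col_of lam k ->
  let k' := pos (row_of lam k) + j in
  [/\ k' < k, row_of lam k' = row_of lam k & col_of lam k' = j].
Proof.
move=> ks jc /=.
have lb := row_lb k; have ub := row_ub ks.
have lt : pos (row_of lam k) + j < k.
  by move: jc; rewrite /col_of ltn_subRL.
have R : row_of lam (pos (row_of lam k) + j) = row_of lam k.
  apply: row_uniq; rewrite leq_addr /=; exact: ltn_trans lt ub.
split => //; by rewrite /col_of R addKn.
Qed.

End Shape.

Lemma card_le_inj (T : finType) (A : {set T}) (g : T -> nat) h :
  {in A &, injective g} -> (forall a, a \in A -> g a < h) -> #|A| <= h.
Proof.
move=> gi gh; rewrite cardE -(size_map g) -[h](size_iota 0).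
apply: uniq_leq_size.
  by rewrite map_inj_in_uniq ?enum_uniq // => x y; rewrite !mem_enum; exact: gi.
move=> j /mapP[a]; rewrite mem_enum => aA ->; rewrite mem_iota /=; exact: gh.
Qed.

Lemma card_ge (T : finType) (A : {set T}) (g : T -> nat) h :
  (forall j, j < h -> exists a, a \in A /\ g a = j) -> h <= #|A|.
Proof.
move=> H; rewrite cardE -(size_map g) -[h](size_iota 0).
apply: uniq_leq_size; first exact: iota_uniq.
move=> j; rewrite mem_iota /= => /H[a [aA <-]].
by apply: map_f; rewrite mem_enum.
Qed.

Lemma card_perm_pre (T : finType) (p : {perm T}) (P : pred T) :
  #|[set k | P (p k)]| = #|[set k | P k]|.
Proof.
rewrite -(card_imset _ (@perm_inj _ p)).
suff -> : [set p x | x in [set k | P (p k)]] = [set k | P k] by [].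
apply/setP => k; rewrite inE; apply/imsetP/idP.
  by case=> x; rewrite inE => Hx ->.
by move=> Pk; exists ((p^-1)%g k); rewrite ?inE permKV.
Qed.

Lemma sum_card_part (T : finType) (g : T -> nat) N (Q : pred T) :
  (forall k, g k < N) ->
  \sum_(i < N) #|[set k | (g k == i) && Q k]| = #|[set k | Q k]|.
Proof.
move=> gN.
have E : forall P : pred T, #|[set k | P k]| = \sum_k (P k : nat).
  move=> P; rewrite -sum1_card big_mkcond; apply: eq_bigr => k _; by rewrite inE.
rewrite [RHS]E (eq_bigr (fun i : 'I_N => \sum_k ((g k == i) && Q k : nat))); last first.
  by move=> i _; rewrite E.
rewrite exchange_big /=; apply: eq_bigr => k _.
rewrite (bigD1 (Ordinal (gN k))) //= big1 ?addn0 ?eqxx //.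
move=> i ik.
case: eqP => //= Hg; case/eqP: ik; apply: val_inj => /=; by rewrite Hg.
Qed.

Lemma sum_eq_le N (a b : nat -> nat) :
  (forall i, i < N -> a i <= b i) ->
  \sum_(i < N) a i = \sum_(i < N) b i -> forall i, i < N -> a i = b i.
Proof.
move=> le E i iN; apply/eqP; rewrite eqn_leq le //=; rewrite leqNgt; apply/negP => lt.
have : \sum_(j < N) a j < \sum_(j < N) b j.
  rewrite (bigD1 (Ordinal iN)) //= [X in _ < X](bigD1 (Ordinal iN)) //=.
  rewrite -addSn; apply: leq_add => //.
  by apply: leq_sum => j _; apply: le.
by rewrite E ltnn.
Qed.

Section CL.
Variables (r : nat) (lam : seq nat).
Hypothesis Hr : sumn lam = r.
Local Notation rho k := (row_of lam (nat_of_ord k)).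
Local Notation kap k := (col_of lam (nat_of_ord k)).

Lemma cell_down_ord (k : 'I_r) j : j < kap k ->
  exists k' : 'I_r, rho k' = rho k /\ kap k' = j.
Proof.
move=> jk.
have ks : k < sumn lam by rewrite Hr.
have [lt R C] := cell_down ks jk.
exists (Ordinal (ltn_trans lt (ltn_ord k))) => /=; by [].
Qed.

Lemma cell_inj_ord (k k' : 'I_r) : rho k = rho k' -> kap k = kap k' -> k = k'.
Proof. by move=> R C; apply: val_inj; apply: cell_inj R C. Qed.

Variable p : {perm 'I_r}.
Hypothesis Hp : forall k k' : 'I_r, kap k = kap k' -> rho (p k) = rho (p k') -> k = k'.

Definition Tset h i := [set k : 'I_r | (rho (p k) == i) && (kap k < h)].
Definition Bset h i := [set k : 'I_r | (rho k == i) && (kap k < h)].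

Lemma TB_le h i : #|Tset h i| <= #|Bset h i|.
Proof.
have T1 : #|Tset h i| <= h.
  apply: (@card_le_inj _ _ (fun k : 'I_r => kap k)).
    move=> a b; rewrite !inE => /andP[/eqP Ha _] /andP[/eqP Hb _] E.
    by apply: Hp => //; rewrite Ha Hb.
  by move=> a; rewrite inE => /andP[_].
have T2 : #|Tset h i| <= #|[set k : 'I_r | rho k == i]|.
  rewrite -(card_perm_pre p (fun k : 'I_r => rho k == i)).
  by apply: subset_leq_card; apply/subsetP => k; rewrite !inE => /andP[].
case: (boolP [forall k : 'I_r, (rho k == i) ==> (kap k < h)]) => [/forallP Hall|].
  suff -> : Bset h i = [set k : 'I_r | rho k == i] by [].
  apply/setP => k; rewrite !inE; case: eqP => //= E.
  by have := Hall k; rewrite E eqxx.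
rewrite negb_forall => /existsP[b]; rewrite negb_imply -leqNgt => /andP[/eqP Rb hb].
apply: leq_trans T1 _.
apply: (@card_ge _ _ (fun k : 'I_r => kap k)) => j jh.
have [k' [R C]] := cell_down_ord (leq_trans jh hb).
by exists k'; rewrite !inE R Rb C eqxx jh.
Qed.

Lemma TB_eq h i : i < (size lam).+1 -> #|Tset h i| = #|Bset h i|.
Proof.
move=> iN.
apply: (@sum_eq_le (size lam).+1 (fun i => #|Tset h i|) (fun i => #|Bset h i|)) => //.
  by move=> j _; apply: TB_le.
rewrite /Tset /Bset.
rewrite (@sum_card_part _ (fun k : 'I_r => rho (p k)) _ (fun k : 'I_r => kap k < h)).
  rewrite (@sum_card_part _ (fun k : 'I_r => rho k) _ (fun k : 'I_r => kap k < h)) //.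
  by move=> k; rewrite ltnS row_size.
by move=> k; rewrite ltnS row_size.
Qed.

Lemma CL (k : 'I_r) : exists k' : 'I_r, kap k' = kap k /\ rho (p k') = rho k.
Proof.
set c := kap k; set i := rho k.
have iN : i < (size lam).+1 by rewrite ltnS row_size.
have sB : Bset c i \proper Bset c.+1 i.
  rewrite properE; apply/andP; split.
    by apply/subsetP => x; rewrite !inE => /andP[-> H]; rewrite ltnS ltnW.
  apply/subsetPn; exists k; first by rewrite !inE eqxx ltnSn.
  by rewrite !inE ltnn andbF.
have := proper_card sB; rewrite -!TB_eq // => lt.
case: (boolP [exists k', (k' \in Tset c.+1 i) && (k' \notin Tset c i)]).
  move/existsP=> [k' /andP[]]; rewrite !inE => /andP[/eqP R1 C1].
  rewrite R1 eqxx /= -leqNgt => C2.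
  exists k'; split => //; apply/eqP; rewrite eqn_leq C2 -ltnS C1 //.
rewrite negb_exists => /forallP H.
have : Tset c.+1 i \subset Tset c i.
  apply/subsetP => x xT; have := H x; by rewrite xT /= negbK.
by move/subset_leq_card; rewrite leqNgt lt.
Qed.

End CL.

Local Open Scope ring_scope.

Section Alg.
Variables (r : nat) (lam : seq nat).

Local Notation sgn p := ((-1) ^+ odd_perm p : int).
Definition Tb (u : 'S_r) : Mperm r := delta (tabloid lam u).

Lemma Tb_eq (v w : 'S_r) : tabloid lam v = tabloid lam w -> Tb v = Tb w.
Proof. by rewrite /Tb => ->. Qed.

Lemma tab_mul (u p : 'S_r) : tabloid lam (u * p)%g = [ffun i => tabloid lam u ((p^-1)%g i)].
Proof. by apply/ffunP => i; rewrite !ffunE invMg permM. Qed.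

Lemma tab_mulE (u p : 'S_r) i : tabloid lam (u * p)%g i = tabloid lam u ((p^-1)%g i).
Proof. by rewrite tab_mul ffunE. Qed.

Lemma act_Tb (s u : 'S_r) : mperm_act s (Tb u) = Tb (u * s)%g.
Proof.
apply/ffunP => psi; rewrite !ffunE; congr (Posz (nat_of_bool _)).
apply/eqP/eqP => [E|->]; apply/ffunP => i.
  have := congr1 (fun f : rowfun r => f ((s^-1)%g i)) E. rewrite /= ffunE permKV => ->.
  by rewrite tab_mulE.
by rewrite ffunE tab_mulE permK.
Qed.

Lemma colgroup1 (t : 'S_r) : colgroup lam t 1%g.
Proof. by apply/forallP => i; rewrite perm1. Qed.

Lemma colgroupM (t p q : 'S_r) : colgroup lam t p -> colgroup lam t q -> colgroup lam t (p * q)%g.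
Proof.
move=> /forallP Hp /forallP Hq; apply/forallP => i.
by rewrite permM (eqP (Hq _)) (eqP (Hp _)).
Qed.

Lemma colgroupV (t p : 'S_r) : colgroup lam t p -> colgroup lam t (p^-1)%g.
Proof.
move=> /forallP Hp; apply/forallP => i.
by have := Hp ((p^-1)%g i); rewrite permKV eq_sym.
Qed.

Lemma colgroupT (t : 'S_r) a b : col_of lam ((t^-1)%g a) = col_of lam ((t^-1)%g b) ->
  colgroup lam t (tperm a b).
Proof.
move=> E; apply/forallP => i.
by case: tpermP => [->|->|]; rewrite ?E.
Qed.

Lemma colgroupJ (t s p : 'S_r) : colgroup lam (t * s)%g (p ^ s)%g = colgroup lam t p.
Proof.
have E : forall i, ((t * s)^-1)%g ((p ^ s)%g i) = (t^-1)%g (p ((s^-1)%g i)).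
  by move=> i; rewrite conjgE invMg !permM permK.
apply/forallP/forallP => H i.
  have := H (s i); by rewrite E permK invMg permM permK.
by rewrite E invMg permM.
Qed.

Lemma mperm_act0 (g : 'S_r) : mperm_act g (0 : Mperm r) = 0.
Proof. by apply/ffunP => psi; rewrite !ffunE. Qed.
Lemma mperm_actD (g : 'S_r) (x y : Mperm r) : mperm_act g (x + y) = mperm_act g x + mperm_act g y.
Proof. by apply/ffunP => psi; rewrite !ffunE. Qed.
Lemma mperm_actZ (g : 'S_r) (x : Mperm r) z : mperm_act g (x *~ z) = mperm_act g x *~ z.
Proof. by apply/ffunP => psi; rewrite ffunMzE !ffunE ffunMzE. Qed.
Lemma mperm_act_sum (g : 'S_r) (I : Type) (s : seq I) (P : pred I) (F : I -> Mperm r) :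
  mperm_act g (\sum_(i <- s | P i) F i) = \sum_(i <- s | P i) mperm_act g (F i).
Proof. exact: (big_morph _ (mperm_actD g) (mperm_act0 g)). Qed.

Lemma poly_act (s t : 'S_r) : mperm_act s (polytabloid lam t) = polytabloid lam (t * s)%g.
Proof.
rewrite /polytabloid mperm_act_sum.
rewrite [RHS](reindex_inj (conjg_inj s)) /=.
apply: eq_big => p; first by rewrite colgroupJ.
move=> _; rewrite mperm_actZ odd_permJ.
have -> : (t * s * p ^ s)%g = (t * p * s)%g by rewrite conjgE !mulgA mulgK.
by rewrite -/(Tb _) act_Tb.
Qed.

End Alg.

Section KL.
Variables (r : nat) (lam : seq nat).
Hypothesis Hr : sumn lam = r.
Hypothesis Hsz : (size lam <= r)%N.

Local Notation sgn p := ((-1) ^+ odd_perm p : int).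
Local Notation Tb := (@Tb r lam).

Definition Kop (t : 'S_r) (x : Mperm r) : Mperm r :=
  \sum_(p : 'S_r | colgroup lam t p) mperm_act p x *~ sgn p.
Definition dot (x y : Mperm r) : int := \sum_psi x psi * y psi.

Lemma dot_Tb u y : dot (Tb u) y = y (tabloid lam u).
Proof.
rewrite /dot (bigD1 (tabloid lam u)) //= big1 ?addr0; first by rewrite ffunE eqxx mul1r.
by move=> psi /negbTE H; rewrite ffunE H mul0r.
Qed.

Lemma rowlt (k : 'I_r) : (row_of lam k < r.+1)%N.
Proof. by rewrite ltnS (leq_trans (row_size _ _) Hsz). Qed.

Lemma tab_colinj (t p q : 'S_r) : colgroup lam t p -> colgroup lam t q ->
  tabloid lam (t * p)%g = tabloid lam (t * q)%g -> p = q.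
Proof.
move=> Cp Cq E; apply: invg_inj; apply/permP => i.
have := congr1 (fun f : rowfun r => f i) E; rewrite !ffunE !invMg !permM => /(congr1 val).
rewrite /= !inordK ?rowlt // => R.
apply: (@perm_inj _ (t^-1)%g). apply: (cell_inj_ord R).
have /forallP Hp := colgroupV Cp; have /forallP Hq := colgroupV Cq.
by rewrite (eqP (Hp i)) (eqP (Hq i)).
Qed.

Lemma tab_eqR (v w s : 'S_r) :
  (tabloid lam (v * s)%g == tabloid lam (w * s)%g) = (tabloid lam v == tabloid lam w).
Proof.
rewrite !tab_mul; apply/eqP/eqP => [E|->//]; apply/ffunP => i.
by have := congr1 (fun f : rowfun r => f (s i)) E; rewrite !ffunE permK.
Qed.

Lemma dichot (t u : 'S_r) :
  (exists a b, [/\ a != b, col_of lam ((t^-1)%g a) = col_of lam ((t^-1)%g b) &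
                 row_of lam ((u^-1)%g a) = row_of lam ((u^-1)%g b)])
  \/ (exists q, colgroup lam t q /\ tabloid lam (t * q)%g = tabloid lam u).
Proof.
case: (boolP [exists a, exists b, [&& a != b, col_of lam ((t^-1)%g a) == col_of lam ((t^-1)%g b) &
                 row_of lam ((u^-1)%g a) == row_of lam ((u^-1)%g b)]]).
  move=> /existsP[a /existsP[b /and3P[H1 /eqP H2 /eqP H3]]]; left; by exists a, b.
rewrite negb_exists => /forallP NH; right.
pose pi := (t * u^-1)%g.
have Hp : forall k k' : 'I_r, col_of lam k = col_of lam k' ->
    row_of lam (pi k) = row_of lam (pi k') -> k = k'.
  move=> k k' C R; apply/eqP; apply: contraT => kk.
  have := NH (t k); rewrite negb_exists => /forallP /(_ (t k')).
  rewrite (inj_eq (@perm_inj _ t)) kk !permK C eqxx /=.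
  by rewrite /pi !permM in R; rewrite R eqxx.
pose g (k : 'I_r) := odflt k [pick k' : 'I_r | (col_of lam k' == col_of lam k) && (row_of lam (pi k') == row_of lam k)].
have gP : forall k, col_of lam (g k) = col_of lam k /\ row_of lam (pi (g k)) = row_of lam k.
  move=> k; rewrite /g; case: pickP => [k' /andP[/eqP C /eqP R] //|none].
  have [k' [C R]] := CL Hr Hp k.
  by have := none k'; rewrite C R !eqxx.
have ginj : injective g.
  move=> k1 k2 E; apply: (@cell_inj_ord _ lam).
    by have [_ R1] := gP k1; have [_ R2] := gP k2; rewrite -R1 -R2 E.
  by have [C1 _] := gP k1; have [C2 _] := gP k2; rewrite -C1 -C2 E.
pose gam := perm ginj.
exists (t^-1 * gam * t)%g; split.
  apply/forallP => i; rewrite !permM permK /gam permE.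
  by have [-> _] := gP ((t^-1)%g i).
apply/ffunP => i; rewrite !ffunE; congr inord.
have -> : (t * (t^-1 * gam * t))%g = (gam * t)%g by rewrite !mulgA mulgV mul1g.
rewrite invMg permM.
set k := ((gam^-1)%g ((t^-1)%g i)).
have [_ R] := gP k.
have gk : gam k = (t^-1)%g i by rewrite /k permKV.
rewrite /gam permE in gk.
by rewrite -R /pi permM gk permKV.
Qed.

Lemma Kop_Tb_sum t u : Kop t (Tb u) = \sum_(p : 'S_r | colgroup lam t p) Tb (u * p)%g *~ sgn p.
Proof. by apply: eq_bigr => p _; rewrite act_Tb. Qed.


Lemma poly_at t phi : polytabloid lam t phi =
  \sum_(p : 'S_r | colgroup lam t p) ((phi == tabloid lam (t * p)%g) : int) * sgn p.
Proof.
rewrite /polytabloid sum_ffunE; apply: eq_bigr => p _.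
by rewrite ffunMzE ffunE mulrzz.
Qed.

Lemma KL t u : Kop t (Tb u) = polytabloid lam t *~ dot (Tb u) (polytabloid lam t).
Proof.
rewrite dot_Tb Kop_Tb_sum.
case: (dichot t u) => [[a [b [ab Cab Rab]]]|[q [Cq Eq]]].
- pose tau := tperm a b.
  have Ct : colgroup lam t tau by apply: colgroupT.
  have Eu : tabloid lam (u * tau)%g = tabloid lam u.
    apply/ffunP => i; rewrite tab_mulE tpermV /tau.
    case: tpermP => [->|->|//]; rewrite !ffunE; by rewrite ?Rab -?Rab.
  have sg : forall p : 'S_r, sgn (tau * p)%g = - sgn p.
    by move=> p; rewrite odd_mul_tperm ab signr_addb expr1 mulN1r.
  have sg' : forall p : 'S_r, sgn (p * tau)%g = - sgn p.
    by move=> p; rewrite odd_permM odd_tperm ab signr_addb expr1 mulrN1.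
  set S := (X in X = _).
  have -> : S = 0.
    have E : S = - S.
      rewrite {1}/S (reindex_inj (mulgI tau)) /= /S -sumrN.
      apply: eq_big => p; first by apply/idP/idP => H;
        [ have := colgroupM (colgroupV Ct) H; rewrite mulKg
        | exact: colgroupM ].
      move=> _; rewrite sg mulrNz mulgA; congr (- (_ *~ _)); apply: Tb_eq.
      by rewrite [tabloid _ (u * tau * p)%g]tab_mul Eu -tab_mul.
    apply/ffunP => psi; have := congr1 (fun f : Mperm r => f psi) E.
    rewrite !ffunE; move: (S psi) => z H; lia.
  set R := polytabloid lam t (tabloid lam u).
  suff -> : R = 0 by rewrite mulr0z.
  have E : R = - R.
    rewrite {1}/R poly_at (reindex_inj (mulIg tau)) /= /R poly_at -sumrN.
    apply: eq_big => p; first by apply/idP/idP => H;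
      [ have := colgroupM H (colgroupV Ct); rewrite mulgK
      | exact: colgroupM ].
    move=> _; rewrite sg' mulrN; congr (- (_ * _)).
    by rewrite mulgA -{1}Eu tab_eqR.
  lia.
- have Hc : polytabloid lam t (tabloid lam u) = sgn q.
    rewrite poly_at (bigD1 q) //= big1 ?addr0; last first.
      move=> p /andP[Cp pq]; case: (tabloid lam u =P tabloid lam (t * p)%g) => [E|_]; last by rewrite mul0r.
      by case/eqP: pq; apply: (tab_colinj Cp Cq); rewrite -E Eq.
    by rewrite Eq eqxx mul1r.
  rewrite Hc.
  rewrite (reindex_inj (mulgI (q^-1)%g)) /= mulrz_suml.
  apply: eq_big => p.
    apply/idP/idP => H; last exact: colgroupM (colgroupV Cq) H.
    by have := colgroupM Cq H; rewrite mulKVg.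
  move=> _; rewrite odd_permM odd_permV signr_addb mulrzA_C.
  congr (_ *~ _); apply: Tb_eq.
  have Eu' : tabloid lam (u * q^-1)%g = tabloid lam t.
    by rewrite tab_mul -Eq -tab_mul mulgK.
  by rewrite mulgA [X in X = _]tab_mul Eu' -tab_mul.
Qed.

End KL.

Lemma size_le_sum (lam : seq nat) : all (fun x => 0 < x)%N lam -> (size lam <= sumn lam)%N.
Proof.
elim: lam => //= a l IH /andP[a0 /IH H].
by rewrite -add1n leq_add.
Qed.

Lemma uniq_rep (M : zmodType) (I : eqType) (b : I -> M) (s : seq I) (c : I -> int) :
  exists s' (c' : I -> int), uniq s' /\ \sum_(i <- s) b i *~ c i = \sum_(i <- s') b i *~ c' i.
Proof.
elim: s => [|a s [s' [c' [us E]]]]; first by exists [::], c.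
rewrite big_cons E.
case: (boolP (a \in s')) => as'.
  exists s', (fun i => if i == a then c' a + c a else c' i); split => //.
  rewrite (bigD1_seq a) // [in RHS](bigD1_seq a) //= eqxx mulrzDr.
  rewrite addrA [b a *~ c a + _]addrC; congr (_ + _).
  by apply: eq_bigr => i /negbTE ->.
exists (a :: s'), (fun i => if i == a then c a else c' i); split; first by rewrite /= as'.
rewrite big_cons eqxx; congr (_ + _); apply: eq_big_seq => i is'.
by case: eqP => // E'; rewrite -E' is' in as'.
Qed.

Lemma free_tf (M : zmodType) : free_Zmodule M ->
  forall (m : M) (d : int), d != 0 -> m *~ d = 0 -> m = 0.
Proof.
move=> [I [b [li sp]]] m d d0 md.
have [s [c E]] := sp m.
have [s' [c' [us E']]] := uniq_rep b s c.
rewrite E E' in md *.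
have Z : forall i, i \in s' -> c' i = 0.
  move=> i is'; have := li s' (fun i => c' i * d) us.
  rewrite mulrz_suml in md.
  have -> : \sum_(i <- s') b i *~ (c' i * d) = 0.
    rewrite -[RHS]md; apply: eq_bigr => j _; by rewrite mulrzA.
  move=> /(_ erefl i is') /eqP; rewrite mulf_eq0 (negbTE d0) orbF => /eqP //.
by rewrite big1_seq // => i /andP[_ /Z ->]; rewrite mulr0z.
Qed.

Section Main.
Variables (r : nat) (lam : seq nat).
Hypothesis Hr : sumn lam = r.
Hypothesis Hsz : (size lam <= r)%N.
Local Notation sgn p := ((-1) ^+ odd_perm p : int).
Local Notation S := (@specht lam r).

Lemma specht0 : S (0 : Mperm r).
Proof. by exists 0; rewrite big1 // => t _; rewrite ffunE mulr0z. Qed.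

Lemma spechtD x y : S x -> S y -> S (x + y).
Proof.
move=> [c1 ->] [c2 ->]; exists (c1 + c2); rewrite -big_split /=.
by apply: eq_bigr => t _; rewrite ffunE mulrzDr.
Qed.

Lemma spechtZ x z : S x -> S (x *~ z).
Proof.
move=> [c ->]; exists [ffun t => c t * z]; rewrite mulrz_suml.
by apply: eq_bigr => t _; rewrite ffunE mulrzA.
Qed.

Lemma spechtN x : S x -> S (- x).
Proof. by move=> Sx; rewrite -mulrN1z; apply: spechtZ. Qed.

Lemma specht_sum (I : Type) (s : seq I) (P : pred I) (F : I -> Mperm r) :
  (forall i, P i -> S (F i)) -> S (\sum_(i <- s | P i) F i).
Proof. move=> H; apply: big_ind => //; [exact: specht0 | exact: spechtD]. Qed.

Lemma specht_poly (t : 'S_r) : S (polytabloid lam t).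
Proof.
exists [ffun t' => ((t' == t) : int)].
rewrite (bigD1 t) //= big1 ?addr0; first by rewrite ffunE eqxx.
by move=> t' /negbTE H; rewrite ffunE H mulr0z.
Qed.

Lemma specht_act (g : 'S_r) x : S x -> S (mperm_act g x).
Proof.
move=> [c ->]; rewrite mperm_act_sum; apply: specht_sum => t _.
by rewrite mperm_actZ poly_act; apply: spechtZ; apply: specht_poly.
Qed.

Lemma Kop0 (t : 'S_r) : Kop lam t 0 = 0.
Proof. by rewrite /Kop big1 // => p _; rewrite mperm_act0 mul0rz. Qed.
Lemma KopD (t : 'S_r) x y : Kop lam t (x + y) = Kop lam t x + Kop lam t y.
Proof. by rewrite /Kop -big_split; apply: eq_bigr => p _; rewrite mperm_actD mulrzDl. Qed.
Lemma KopZ (t : 'S_r) x z : Kop lam t (x *~ z) = Kop lam t x *~ z.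
Proof. by rewrite /Kop mulrz_suml; apply: eq_bigr => p _; rewrite mperm_actZ mulrzAC. Qed.

Lemma dot0 (y : Mperm r) : dot 0 y = 0.
Proof. by rewrite /dot big1 // => p _; rewrite ffunE mul0r. Qed.
Lemma dotD (x y e : Mperm r) : dot (x + y) e = dot x e + dot y e.
Proof. by rewrite /dot -big_split; apply: eq_bigr => p _; rewrite ffunE mulrDl. Qed.
Lemma dotZ (x : Mperm r) z (e : Mperm r) : dot (x *~ z) e = dot x e * z.
Proof.
rewrite /dot -mulrzz mulrz_suml; apply: eq_bigr => p _.
by rewrite ffunMzE mulrzAl.
Qed.

Lemma KS (t : 'S_r) x : S x -> Kop lam t x = polytabloid lam t *~ dot x (polytabloid lam t).
Proof.
set e := polytabloid lam t.
pose Q x := Kop lam t x = e *~ dot x e.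
have Q0 : Q 0 by rewrite /Q Kop0 dot0 mulr0z.
have QD : forall x y, Q x -> Q y -> Q (x + y).
  by move=> x1 y1; rewrite /Q KopD dotD mulrzDr => -> ->.
have QZ : forall x z, Q x -> Q (x *~ z).
  by move=> x1 z; rewrite /Q KopZ dotZ mulrzA => ->.
have Qs : forall (I : Type) (s : seq I) (P : pred I) F c,
    (forall i, Q (F i)) -> Q (\sum_(i <- s | P i) F i *~ c i).
  by move=> I s P F c H; apply: big_ind => // i _; apply: QZ.
move=> [c ->]; apply: (Qs) => t'.
rewrite /polytabloid; apply: (Qs) => p.
exact: KL.
Qed.

Lemma dot_self (x : Mperm r) : x != 0 -> dot x x != 0.
Proof.
move=> /eqP nx; apply/negP => /eqP E; apply: nx; apply/ffunP => psi.
rewrite ffunE; move/eqP: E; rewrite /dot Num.Theory.psumr_eq0 => [/allP H|q _].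
  have := H psi (mem_index_enum _); rewrite /= mulf_eq0 orbb => /eqP //.
by rewrite -expr2 Num.Theory.sqr_ge0.
Qed.

End Main.

Unset Implicit Arguments.

Theorem lemma3p3 (r : nat) (lam : seq nat) (M : zmodType)
    (rho : 'S_r -> M -> M) (f : Mperm r -> M) :
  is_partition lam r ->
  is_ZSr_action rho ->
  free_Zmodule M ->
  (* f : S^lam -> M is a homomorphism of Z S_r-modules *)
  (forall x y, specht lam x -> specht lam y -> f (x + y) = f x + f y) ->
  (forall (g : 'S_r) x, specht lam x -> f (mperm_act g x) = rho g (f x)) ->
  (* f is non-zero *)
  (exists x, specht lam x /\ f x <> 0) ->
  (* f is injective *)
  forall x y, specht lam x -> specht lam y -> f x = f y -> x = y.
Proof.
move=> Hpart [rhoD _ _] Hfree fadd fact [w [Sw fw]] x y Sx Sy fxy.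
have /and3P[_ Hpos /eqP Hr] := Hpart.
have Hsz : (size lam <= r)%N by rewrite -Hr size_le_sum.
have s0 := @specht0 r lam.
have f0 : f 0 = 0.
  have := fadd 0 0 s0 s0; rewrite addr0 => /esym/eqP; rewrite -subr_eq0 addrK => /eqP //.
have rho0 : forall g, rho g 0 = 0.
  move=> g; have := rhoD g 0 0; rewrite addr0 => /esym/eqP; rewrite -subr_eq0 addrK => /eqP //.
have fZn : forall z, specht lam z -> forall n, f (z *+ n) = f z *+ n.
  move=> z Sz; elim => [|n IH]; first by rewrite !mulr0n f0.
  rewrite !mulrS fadd // ?IH // pmulrn; exact: spechtZ.
have fN : forall z, specht lam z -> f (- z) = - f z.
  move=> z Sz; have := fadd (- z) z (spechtN Sz) Sz; rewrite addNr f0 => /esym/eqP.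
  by rewrite addr_eq0 => /eqP.
have fZ : forall z, specht lam z -> forall c : int, f (z *~ c) = f z *~ c.
  move=> z Sz [] n; first by rewrite -!pmulrn fZn.
  rewrite NegzE -!nmulrn fN ?fZn //; rewrite pmulrn; exact: spechtZ.
have fsum : forall (I : Type) (s : seq I) (P : pred I) (F : I -> Mperm r),
    (forall i, specht lam (F i)) -> f (\sum_(i <- s | P i) F i) = \sum_(i <- s | P i) f (F i).
  move=> I s P F H.
  suff : specht lam (\sum_(i <- s | P i) F i) /\ f (\sum_(i <- s | P i) F i) = \sum_(i <- s | P i) f (F i) by case.
  apply: (big_ind2 (fun a b => specht lam a /\ f a = b)).
  - by split.
  - move=> a1 b1 a2 b2 [S1 E1] [S2 E2]; split; first exact: spechtD.
    by rewrite fadd // E1 E2.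
  - by move=> i _; split.
have fz : forall z, specht lam z -> f z = 0 -> z = 0.
  move=> z Sz fz0; apply/eqP; apply: contraT => nz.
  have [c Ez] := Sz.
  have [t dt] : exists t, dot z (polytabloid lam t) != 0.
    case: (boolP [exists t, dot z (polytabloid lam t) != 0]) => [/existsP //|].
    rewrite negb_exists => /forallP H.
    have := dot_self nz; rewrite [X in dot _ X]Ez.
    have dsym : forall a b : Mperm r, dot a b = dot b a.
      by move=> a b; rewrite /dot; apply: eq_bigr => q _; rewrite mulrC.
    rewrite dsym (big_morph (fun a => dot a z) (fun a b => dotD a b z) (dot0 z)).
    rewrite big1 ?eqxx // => t _; rewrite dotZ dsym (eqP (negbNE (H t))) mul0r //.
  have K := KS Hr Hsz t Sz.
  have fK : f (Kop lam t z) = 0.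
    rewrite /Kop fsum => [|p]; last by apply: spechtZ; apply: specht_act.
    apply: big1 => p _; rewrite fZ ?fact ?fz0 ?rho0 ?mul0rz //; exact: specht_act.
  rewrite K fZ in fK; last exact: specht_poly.
  have fe : f (polytabloid lam t) = 0 := free_tf Hfree dt fK.
  have fall : forall t', f (polytabloid lam t') = 0.
    move=> t'; have -> : polytabloid lam t' = mperm_act (t^-1 * t')%g (polytabloid lam t).
      by rewrite poly_act mulKVg.
    by rewrite fact ?fe ?rho0 //; apply: specht_poly.
  case: fw; have [cw ->] := Sw.
  rewrite fsum => [|t']; last by apply: spechtZ; apply: specht_poly.
  by apply: big1 => t' _; rewrite fZ ?fall ?mul0rz //; apply: specht_poly.
apply: subr0_eq; apply: fz; first by apply: spechtD => //; apply: spechtN.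
by rewrite fadd ?fN ?fxy ?subrr //; apply: spechtN.
Qed.
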